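(* Let $\mathcal A=(Q,T,\delta,X)$ be an OCAPT with initial state $q_0$ and target set $F\subseteq Q$. If there is a valuation $V$ such that all infinite $V$-runs of $\mathcal A$ from $(q_0,0)$ reach $F$, then there is a valuation $V'$ with $V'(x)=\exp(|\mathcal A|^{\mathcal O(1)})$ (i.e. bounded by $2^{p(|\mathcal A|)}$ for a fixed polynomial $p$) for all $x\in X$, such that all infinite $V'$-runs of $\mathcal A$ from $(q_0,0)$ reach $F$.
   Context: An OCAPT is $\mathcal A=(Q,T,\delta,X)$ with finite state set $Q$, finite parameter set $X$, transitions $T\subseteq Q\times Q$, and $\delta:T\to Op$ where $Op$ consists of updates $+a$ with $a\in\{-1,0,1\}$, the zero test $=0$, and parametric tests $=x$, $\ge x$ ($x\in X$); no parametric updates. A valuation is $V:X\to\mathbb{N}$. A $V$-run is a sequence of configurations $(q_i,c_i)\in Q\times\mathbb{N}$ with $(q_i,q_{i+1})\in T$ such that tests hold ($c_i=0$, $c_i=V(x)$, $c_i\ge V(x)$, with $c_{i+1}=c_i$) and updates are applied ($c_{i+1}=c_i+a$). A run reaches $F$ if some state in it belongs to $F$. *)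

(* Defs.v *)
From mathcomp Require Import all_boot.
Set Implicit Arguments. Unset Strict Implicit. Unset Printing Implicit Defensive.

Inductive Op (X : Type) : Type :=
| OInc
| ODec
| ONop
| OZero
| OEq of X
| OGe of X.

(* An OCAPT A = (Q, T, delta, X): finite state type Q, finite parameter type X;
   [ocapt_delta A q q' = Some op] iff (q,q') \in T and delta (q,q') = op. *)
Record OCAPT (Q X : finType) := mkOCAPT { ocapt_delta : Q -> Q -> option (Op X) }.

Definition ocapt_size (Q X : finType) (A : OCAPT Q X) : nat :=
  #|Q| + #|[pred p : Q * Q | isSome (ocapt_delta A p.1 p.2)]| + #|X|.

Definition valuation (X : finType) := X -> nat.

Definition op_step (X : finType) (V : valuation X) (op : Op X) (c c' : nat) : Prop :=
  match op with
  | OInc => c' = c.+1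
  | ODec => c = c'.+1
  | ONop => c' = c
  | OZero => c = 0 /\ c' = c
  | OEq x => c = V x /\ c' = c
  | OGe x => V x <= c /\ c' = c
  end.

Definition step (Q X : finType) (A : OCAPT Q X) (V : valuation X)
  (s s' : Q * nat) : Prop :=
  exists op, ocapt_delta A s.1 s'.1 = Some op /\ op_step V op s.2 s'.2.

Definition inf_run_from (Q X : finType) (A : OCAPT Q X) (V : valuation X)
  (q0 : Q) (r : nat -> Q * nat) : Prop :=
  r 0 = (q0, 0) /\ forall i, step A V (r i) (r i.+1).

Definition reaches (Q : finType) (F : {set Q}) (r : nat -> Q * nat) : Prop :=
  exists i, (r i).1 \in F.

Definition all_inf_runs_reach (Q X : finType) (A : OCAPT Q X) (V : valuation X)
  (q0 : Q) (F : {set Q}) : Prop :=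
  forall r, inf_run_from A V q0 r -> reaches F r.

(* Main.v *)
Require Import Defs.
From mathcomp Require Import all_boot.
From mathcomp Require Import zify.
Set Implicit Arguments. Unset Strict Implicit.

Section S.
Variables (Q X : finType) (A : OCAPT Q X) (W : valuation X).

Definition shiftc (e : nat) (s : Q * nat) : Q * nat := (s.1, s.2 + e).

Lemma shiftc0 s : shiftc 0 s = s.
Proof. by case: s => a b; rewrite /shiftc /= addn0. Qed.

Lemma op_shift op c c' e :
  op_step W op c c' -> (c' <> c \/ (c <> 0 /\ forall x, c <> W x)) ->
  op_step W op (c + e) (c' + e).
Proof.
case: op => [||||x|x] /=.
- by move=> ->; rewrite addSn.
- by move=> ->; rewrite addSn.
- by move=> ->.
- by move=> [-> ->] [//|[]].
- by move=> [-> ->] [//|[_ /(_ x)]].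
- move=> [h ->] _; split=> //; exact: leq_trans h (leq_addr _ _).
Qed.

Lemma step_le s s' : step A W s s' -> s'.2 <= s.2.+1.
Proof.
case=> op [_]; case: op => [||||x|x] /=; try (move=> [_ ->]); try (move=> ->); try lia.
Qed.

Lemma step_ge s s' : step A W s s' -> s.2 <= s'.2.+1.
Proof.
case=> op [_]; case: op => [||||x|x] /=; try (move=> [_ ->]); try (move=> ->); try lia.
Qed.

Fixpoint pos (p m : nat) : nat * nat :=
  match m with
  | 0 => (0, 0)
  | m'.+1 => let: (i, n) := pos p m' in if i.+1 < p then (i.+1, n) else (0, n.+1)
  end.

Lemma pos_lt p m : 0 < p -> (pos p m).1 < p.
Proof.
move=> hp; elim: m => [|m IH] //=.
case: (pos p m) IH => i n /= _. by case: ifP.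
Qed.

Lemma periodic (F : {set Q}) (q0 : Q) (r : nat -> Q * nat) u u' d :
  u < u' -> (r u').1 = (r u).1 -> (r u').2 = (r u).2 + d ->
  (forall t, t < u -> step A W (r t) (r t.+1)) ->
  (forall t, u <= t < u' -> forall n, step A W (shiftc (n * d) (r t)) (shiftc (n * d) (r t.+1))) ->
  r 0 = (q0, 0) -> (forall t, t <= u' -> (r t).1 \notin F) ->
  exists r', inf_run_from A W q0 r' /\ ~ reaches F r'.
Proof.
move=> uu' e1 e2 hpre hseg h0 hF.
set p := u' - u.
have hp : 0 < p by rewrite /p subn_gt0.
pose r' t := if t < u then r t else shiftc ((pos p (t - u)).2 * d) (r (u + (pos p (t - u)).1)).
exists r'; split; first split.
- rewrite /r'; case: ifP => hu //. have -> : u = 0 by lia. by rewrite /= mul0n shiftc0.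
- move=> t; rewrite /r'.
  case: (ltnP t.+1 u) => h1.
  + by rewrite (ltnW h1); apply: hpre; exact: ltnW.
  case: ltnP => h2.
  + have eu : u = t.+1 by apply/eqP; rewrite eqn_leq h1 h2.
    rewrite eu subnn /= mul0n shiftc0 addn0; apply: hpre; rewrite eu ltnSn //.
  + rewrite subSn //=.
    have hlt := pos_lt (t - u) hp.
    case: (pos p (t - u)) hlt => i n /= hi.
    case: ifP => hi1 /=.
    * rewrite addnS; apply: hseg; rewrite leq_addr /=.
      by rewrite /p in hi1; lia.
    * have -> : shiftc (n.+1 * d) (r (u + 0)) = shiftc (n * d) (r (u + i).+1).
        have -> : (u + i).+1 = u' by rewrite /p in hi hi1; lia.
        rewrite addn0 /shiftc e1 e2; congr (_, _); rewrite mulSn; lia.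
      apply: hseg; rewrite leq_addr /=. by rewrite /p in hi; lia.
- case=> t; rewrite /r'; case: ifP => ht.
  + by apply/negP; apply: hF; lia.
  + rewrite /=; apply/negP; apply: hF.
    have := pos_lt (t - u) hp; rewrite /p; lia.
Qed.

End S.

Section Core.
Variables (Q X : finType) (A : OCAPT Q X) (W : valuation X).

Lemma pigeon (T T' : finType) (f : T -> T') : #|T'| < #|T| ->
  exists x y, x != y /\ f x = f y.
Proof.
move=> h; case: (boolP (injectiveb f)) => [/injectiveP inj|/injectivePn [x [y ne e]]].
- by have := leq_card _ inj; rewrite leqNgt h.
- by exists x, y.
Qed.

Lemma ivt (r : nat -> Q * nat) N : (forall t, t < N -> step A W (r t) (r t.+1)) ->
  forall t2 t1 v, t1 <= t2 -> t2 <= N -> (r t1).2 <= v <= (r t2).2 ->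
  exists t, t1 <= t <= t2 /\ (r t).2 = v.
Proof.
move=> hs; elim=> [|t2 IH] t1 v h12 h2N /andP [hv1 hv2].
- exists 0; have e : t1 = 0 by lia. subst t1; split => //; lia.
- case: (eqVneq (r t2.+1).2 v) => [e|ne]; first by exists t2.+1; split => //; lia.
  case: (eqVneq t1 t2.+1) => [e1|ne1]; first by subst; lia.
  have hst := step_le (hs t2 h2N).
  have [t [ht e]] : exists t, t1 <= t <= t2 /\ (r t).2 = v.
    apply: IH; try lia; apply/andP; split; lia.
  exists t; split => //; lia.
Qed.

Lemma free_block H : 0 < H -> exists j, j <= #|X| /\ forall x, W x %/ H != j.
Proof.
move=> hH.
pose g (x : X) : 'I_#|X|.+1 := inord (W x %/ H).
case: (boolP [exists j : 'I_#|X|.+1, [forall x, g x != j]]).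
- move/existsP => [j /forallP hj]; exists j; split; first by have := ltn_ord j; lia.
  move=> x; apply/eqP => e; have := hj x; by rewrite /g e inord_val eqxx.
- rewrite negb_exists => /forallP hall.
  have : #|'I_#|X|.+1| <= #|codom g|.
    apply/subset_leq_card/subsetP => j _.
    have := hall j; rewrite negb_forall => /existsP [x]; rewrite negbK => /eqP <-.
    exact: codom_f.
  have := leq_image_card g X. rewrite card_ord. move=> h1 h2.
  have := leq_trans h2 h1. by rewrite ltnn.
Qed.

End Core.

Definition bigN (Q X : finType) := #|Q| * (#|X|.+1 * #|Q|.+2).

Section Core2.
Variables (Q X : finType) (A : OCAPT Q X) (W : valuation X).

Lemma core (F : {set Q}) q0 (r : nat -> Q * nat) :
  r 0 = (q0, 0) -> (forall t, t < bigN Q X -> step A W (r t) (r t.+1)) ->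
  (forall t, t <= bigN Q X -> (r t).1 \notin F) ->
  exists r', inf_run_from A W q0 r' /\ ~ reaches F r'.
Proof.
move=> h0 hs hF.
set K := #|Q|. set H := K.+2. set M := #|X|.+1 * H.
have eN : bigN Q X = K * M by [].
have c0 : (r 0).2 = 0 by rewrite h0.
case: (boolP [exists t : 'I_(bigN Q X).+1, M <= (r t).2]).
- move/existsP => [[t0 ht0] /= hM].
  have [j [hj hW]] := free_block W (ltn0Sn K.+1 : 0 < H).
  set a := j * H. set B := a + K.+1.
  have hBM : B <= M.
    have := leq_mul hj (leqnn H); rewrite /B /a /M mulSn /H; lia.
  have Hs : exists s, s <= t0 /\ B <= (r s).2 /\ forall t, t < s -> (r t).2 < B.
    have exP : exists t, (t <= t0) && (B <= (r t).2).
      by exists t0; rewrite leqnn /=; apply: leq_trans hBM hM.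
    case: (ex_minnP exP) => s /andP [h1 h2] hmin; exists s; split => //; split => //.
    move=> t ht; rewrite ltnNge; apply/negP => hb.
    have := hmin t; rewrite hb andbT. have -> : t <= t0 by lia. move=> /(_ isT). lia.
  case: Hs => s [hs0 [hsB hsmin]].
  have hsN : s <= bigN Q X by lia.
  have key : forall k, k < B -> {u | [/\ u <= s, (r u).2 = k & forall t, u < t <= s -> k < (r t).2]}.
    move=> k hk.
    have exP : exists t, (t <= s) && ((r t).2 == k).
      have hk0 : (r 0).2 <= k <= (r s).2 by apply/andP; split; lia.
      have [t [ht e]] := ivt hs (leq0n s) hsN hk0.
      by exists t; rewrite e eqxx andbT; lia.
    have ubP : forall t, (t <= s) && ((r t).2 == k) -> t <= s by move=> t /andP[].
    exists (ex_maxn exP ubP). case: ex_maxnP => u /andP [hu /eqP hk'] hmax. split => // t /andP [ht1 ht2].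
    rewrite ltnNge; apply/negP => hle.
    have hk1 : (r t).2 <= k <= (r s).2 by apply/andP; split; lia.
    have [t' [ht' e']] := ivt hs ht2 hsN hk1.
    have := hmax t'; rewrite e' eqxx andbT. have -> : t' <= s by lia. move=> /(_ isT). lia.
  have hkB : forall i : 'I_K.+1, a + i < B by move=> i; rewrite /B ltn_add2l (ltn_ord i).
  pose f (i : 'I_K.+1) : Q := (r (sval (key _ (hkB i)))).1.
  have main : forall i i' : 'I_K.+1, i < i' -> f i = f i' ->
      exists r', inf_run_from A W q0 r' /\ ~ reaches F r'.
    move=> i i' hii'; rewrite /f.
    case: (key _ (hkB i)) => u [hus huk hu]; case: (key _ (hkB i')) => u' [hus' huk' hu'] /= efi.
    have huu' : u < u'.
      have : u' < u \/ u' = u \/ u < u' by lia.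
      case => [h1|[h1|//]].
      * have := hu' u; rewrite h1 hus huk => /(_ isT); lia.
      * move: huk huk'; rewrite h1 => ->; lia.
    apply: (periodic (r := r) (d := (a+i') - (a+i)) huu').
    + by rewrite efi.
    + rewrite huk huk'; lia.
    + move=> t ht; apply: hs; lia.
    + move=> t /andP [ht1 ht2] n.
      have htN : t < bigN Q X by lia.
      have [op [hd hop]] := hs t htN.
      exists op; split => //=. apply: op_shift => //.
      case: (eqVneq t u) => [et|net].
      * left. subst t. have := hu u.+1. rewrite ltnSn /=. have -> : u < s by lia.
        move=> /(_ isT). rewrite huk. lia.
      * right. have htu : u < t by lia.
        have hts' : u < t <= s by apply/andP; split; lia.
        have hct := hu t hts'.
        have hts : t < s by lia.
        have hcB := hsmin t hts.
        split; first lia.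
        move=> x ex. have := hW x. rewrite -ex.
        suff -> : (r t).2 %/ H = j by rewrite eqxx.
        apply/eqP; rewrite eqn_leq leq_divRL // -ltnS ltn_divLR //.
        have := mulSn j H; rewrite /B /a /H in hcB hct * => hm.
        apply/andP; split; lia.
    + exact h0.
    + move=> t ht; apply: hF; lia.
  have hc : #|Q| < #|'I_K.+1| by rewrite card_ord.
  have [i [i' [ne e]]] := pigeon f hc.
  case: (ltngtP i i') => h.
  + exact: main h e.
  + exact: main h (esym e).
  + by move: ne; rewrite (val_inj h) eqxx.
- rewrite negb_exists => /forallP hall.
  have hlt : forall t, t <= bigN Q X -> (r t).2 < M.
    move=> t ht; have := hall (Ordinal (ht : t < (bigN Q X).+1)); rewrite /= ltnNge //.
  pose f (t : 'I_(bigN Q X).+1) : Q * 'I_M := ((r t).1, Ordinal (hlt t (ltn_ord t))).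
  have main : forall t t' : 'I_(bigN Q X).+1, t < t' -> f t = f t' ->
      exists r', inf_run_from A W q0 r' /\ ~ reaches F r'.
    move=> t t' htt' /(congr1 (fun p => (p.1, val p.2))) /= [e1 e2].
    apply: (periodic (r := r) (d := 0) htt').
    + by rewrite e1.
    + by rewrite e2 addn0.
    + move=> t1 ht1; apply: hs; have := ltn_ord t'; lia.
    + move=> t1 /andP [ht1 ht2] n; rewrite muln0 !shiftc0; apply: hs; have := ltn_ord t'; lia.
    + exact h0.
    + move=> t1 ht1; apply: hF; have := ltn_ord t'; lia.
  have hc : #|{: (Q * 'I_M)%type}| < #|'I_(bigN Q X).+1| by rewrite card_prod !card_ord eN.
  have [t [t' [ne e]]] := pigeon f hc.
  case: (ltngtP t t') => h.
  + exact: main h e.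
  + exact: main h (esym e).
  + by move: ne; rewrite (val_inj h) eqxx.
Qed.

End Core2.

Theorem lemma22 :
  exists c : nat,
  forall (Q X : finType) (A : OCAPT Q X) (q0 : Q) (F : {set Q}),
    (exists V : valuation X, all_inf_runs_reach A V q0 F) ->
    exists V' : valuation X,
      (forall x : X, V' x <= 2 ^ ((ocapt_size A).+1 ^ c)) /\
      all_inf_runs_reach A V' q0 F.
Proof.
exists 3 => Q X A q0 F [V HV].
pose N := bigN Q X.
pose V' : valuation X := fun x => minn (V x) N.+1.
exists V'; split.
- move=> x; apply: leq_trans (geq_minr _ _) _.
  set S := (ocapt_size A).+1.
  have hK : #|Q| < S by rewrite /S /ocapt_size; lia.
  have hX : #|X| < S by rewrite /S /ocapt_size; lia.
  have h1 : N.+1 <= S ^ 3.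
    rewrite /N /bigN.
    have e3 : S ^ 3 = S * (S * S) by rewrite !expnS expn0 muln1.
    rewrite e3.
    have h2 : #|Q| * (#|X|.+1 * #|Q|.+2) <= #|Q| * (S * #|Q|.+2) by apply: leq_mul => //; apply: leq_mul.
    nia.
  apply: leq_trans h1 _; exact: ltnW (ltn_expl _ (isT : 1 < 2)).
- move=> r [h0 hst].
  case: (boolP [exists t : 'I_N.+1, (r t).1 \in F]) => [/existsP [t ht]|].
  + by exists t.
  + rewrite negb_exists => /forallP hnF.
    have hc : forall t, (r t).2 <= t.
      elim=> [|t IH]; first by rewrite h0.
      have := step_le (hst t); lia.
    have hsV : forall t, t < N -> step A V (r t) (r t.+1).
      move=> t ht; have [op [hd hop]] := hst t; exists op; split => //.
      have hct := hc t. move: hop; rewrite /V'; case: op {hd} => [||||x|x] //=.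
      * move=> [e1 e2]; split => //; lia.
      * move=> [e1 e2]; split => //; lia.
    have hF' : forall t, t <= N -> (r t).1 \notin F.
      by move=> t ht; have := hnF (Ordinal (ht : t < N.+1)).
    have [r' [hr' hnr']] := core h0 hsV hF'.
    by case: hnr'; apply: HV.
Qed.
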